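(* Let $K=K(p,q)$ be a 2-bridge knot with $e_i,\sigma,C,D,W,W_*$ as in the context, let $n\in\mathbb{Z}$ and $N=n-2\sigma$. If $t\in\mathbb{C}\setminus\{0\}$ and $u=(t-t^{-1})^2$, then the equations $C^NW_*W=\mathrm{Id}$ and $WC=DW$ do not both hold.
   Context: $K(p,q)$ denotes the 2-bridge knot with $p,q$ odd integers, $q\in(-p,p)$. For $1\le i\le p-1$ let $e_i=(-1)^{\lfloor iq/p\rfloor}$ and $\sigma=\sum_{i=1}^{p-1}e_i$. For $t\in\mathbb{C}\setminus\{0\}$, $u\in\mathbb{C}$ let $C=\begin{pmatrix}t&1\\0&t^{-1}\end{pmatrix}$, $D=\begin{pmatrix}t&0\\-u&t^{-1}\end{pmatrix}$, $W=C^{e_1}D^{e_2}\cdots C^{e_{p-2}}D^{e_{p-1}}$ and $W_*=D^{e_1}C^{e_2}\cdots D^{e_{p-2}}C^{e_{p-1}}$. *)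

(* Defs.v *)
From HB Require Import structures.
From mathcomp Require Import all_boot all_order all_algebra.
From mathcomp Require Import complex.
From mathcomp Require Import Rstruct.
Set Implicit Arguments. Unset Strict Implicit. Unset Printing Implicit Defensive.
Import Order.TTheory GRing.Theory Num.Theory.
Local Open Scope ring_scope.

Definition CC : Type := complex Rdefinitions.R.

(* e_i = (-1)^{floor(i q / p)}; for p > 0 the intdiv quotient (m %/ p)%Z
   is the floor of m / p. *)
Definition eps (p q : int) (i : nat) : int := (-1) ^ (divz (i%:Z * q) p).

Definition sigma (p q : int) : int := \sum_(1 <= i < `|p|%N) eps p q i.

Definition Cmx (t : CC) : 'M[CC]_2 :=
  \matrix_(i < 2, j < 2)
    (if (i == 0) && (j == 0) then t
     else if (i == 0) && (j == 1) then 1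
     else if (i == 1) && (j == 1) then t^-1 else 0).

Definition Dmx (t u : CC) : 'M[CC]_2 :=
  \matrix_(i < 2, j < 2)
    (if (i == 0) && (j == 0) then t
     else if (i == 1) && (j == 0) then - u
     else if (i == 1) && (j == 1) then t^-1 else 0).

Definition Wmx (p q : int) (t u : CC) : 'M[CC]_2 :=
  \prod_(1 <= i < `|p|%N) (if odd i then Cmx t else Dmx t u) ^ eps p q i.

Definition Wstar (p q : int) (t u : CC) : 'M[CC]_2 :=
  \prod_(1 <= i < `|p|%N) (if odd i then Dmx t u else Cmx t) ^ eps p q i.

(* Main.v *)
Require Import Defs.
From HB Require Import structures.
From mathcomp Require Import all_boot all_order all_algebra.
From mathcomp Require Import complex.
From mathcomp Require Import Rstruct.
From mathcomp Require Import ring.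
Import Order.TTheory GRing.Theory Num.Theory.
Local Open Scope ring_scope.

Definition Vmx (t : CC) : 'M[CC]_2 :=
  \matrix_(i < 2, j < 2) (if j == 0 then (if i == 0 then 1 else t^-1 - t) else 0).

Ltac mx22 := apply/matrixP; case=> [[|[|?]] ?]; case=> [[|[|?]] ?] //;
  rewrite !mxE /= ?big_ord_recl ?big_ord0 /= ?mxE /=.

Lemma CV (t : CC) : t != 0 -> Cmx t * Vmx t = t^-1 *: Vmx t.
Proof. move=> t0; mx22; (field; try exact t0; try done). Qed.

Lemma DV (t : CC) : t != 0 -> Dmx t ((t - t^-1) ^+ 2) * Vmx t = t *: Vmx t.
Proof. move=> t0; mx22; (field; try exact t0; try done). Qed.

Lemma Cunit (t : CC) : t != 0 -> Cmx t \is a GRing.unit.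
Proof.
move=> t0; apply/unitrP; exists (\matrix_(i < 2, j < 2)
   (if (i == 0) && (j == 0) then t^-1 else if (i == 0) && (j == 1) then -1
    else if (i == 1) && (j == 1) then t else 0)).
split; mx22; (field; try exact t0; try done).
Qed.

Lemma Dunit (t u : CC) : t != 0 -> Dmx t u \is a GRing.unit.
Proof.
move=> t0; apply/unitrP; exists (\matrix_(i < 2, j < 2)
   (if (i == 0) && (j == 0) then t^-1 else if (i == 1) && (j == 0) then u
    else if (i == 1) && (j == 1) then t else 0)).
split; mx22; (field; try exact t0; try done).
Qed.

Lemma powV (X V : 'M[CC]_2) (s : CC) (z : int) :
  X \is a GRing.unit -> s != 0 -> X * V = s *: V -> X ^ z * V = s ^ z *: V.
Proof.
move=> Xu s0 XV.
have Hn : forall k : nat, X ^+ k * V = s ^+ k *: V.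
  elim=> [|k IH]; first by rewrite !expr0 mul1r scale1r //.
  by rewrite exprS -mulrA IH -scalerAr XV scalerA -exprSr.
case: z => k; first exact: Hn k.
rewrite /exprz.
have U : X ^+ k.+1 \is a GRing.unit by rewrite unitrX.
have s1 : s ^+ k.+1 \is a GRing.unit by rewrite unitfE expf_neq0.
have H := Hn k.+1.
apply: (@scalerI _ _ (s ^+ k.+1)); first by rewrite expf_neq0.
rewrite scalerAr -H mulKr // scalerA mulrV //  scale1r //.
Qed.

Theorem mainTheorem6 (p q : int) (n : int) (t : CC) :
  odd `|p|%N -> odd `|q|%N -> - p < q < p ->
  t != 0 ->
  let u := (t - t^-1) ^+ 2 in
  let N := n - 2 * sigma p q in
  ~ (Cmx t ^ N * Wstar p q t u * Wmx p q t u = 1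
     /\ Wmx p q t u * Cmx t = Dmx t u * Wmx p q t u).
Proof.
move=> _ _ _ t0 u N [_ HWC].
have [l [l0 WV]] : exists l, l != 0 /\ Wmx p q t u * Vmx t = l *: Vmx t.
  rewrite /Wmx; apply: (big_ind (fun M => exists l, l != 0 /\ M * Vmx t = l *: Vmx t)).
  - by exists 1; split; [exact: oner_neq0 | rewrite mul1r scale1r].
  - move=> M1 M2 [l1 [n1 e1]] [l2 [n2 e2]]; exists (l1 * l2); split.
      by rewrite mulf_neq0.
    by rewrite -mulrA e2 -scalerAr e1 scalerA mulrC.
  - move=> i _; case: (odd i).
    + exists (t^-1 ^ eps p q i); split; first by rewrite expfz_neq0 // invr_neq0.
      by apply: powV; [exact: Cunit | rewrite invr_neq0 | exact: CV].
    + exists (t ^ eps p q i); split; first by rewrite expfz_neq0.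
      by apply: powV; [exact: Dunit | | exact: DV].
set W := Wmx p q t u in WV HWC.
have e1 : (W * Vmx t) 0 0 = (l *: Vmx t) 0 0 by rewrite WV.
have e2 : (W * Cmx t) 0 1 = (Dmx t u * W) 0 1 by rewrite HWC.
rewrite /= !mxE /= !big_ord_recl !big_ord0 !mxE /= in e1 e2.
move/eqP: l0; apply.
have Ea : (0 : 'I_2) = ord0 by apply/val_inj.
have El : lift ord0 ord0 = (1 : 'I_2) by apply/val_inj.
rewrite ?Ea ?El in e1 e2.
rewrite -[l]mulr1 -e1.
apply: (etrans _ (subrr (t * W ord0 1 + (0 * W 1 1 + 0)))).
rewrite -{1}e2; ring.
Qed.
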